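(* Let $\Sigma\subseteq\mathbb{C}$ be a nonempty compact set, $L$ a bounded band operator on $\ell^2(\mathbb{Z})$ with $LS=SL$, and $\gamma\in\mathbb{Z}$. Let $b,c\in\Sigma^{\mathbb{N}}$ and let $H(b)^+$, $H(c)^+$ be the corresponding half-axis generalized Schrödinger operators, with band-width $w$. If $N\in\mathbb{N}$ and \[ b|_{1..w+N-1}=c|_{1..w+N-1}\qquad\text{and}\qquad\mathcal{W}_N(b)\subseteq\mathcal{W}_N(c), \] then $\nu_N(H(b)^+)\ge\nu_N(H(c)^+)$.
   Context: $\mathbb{N}=\{1,2,\dots\}$, $a..b:=\{n\in\mathbb{Z}:a\le n\le b\}$, $(Sx)_n=x_{n-1}$, $(M_ux)_n=u_nx_n$. For $u\in\Sigma^{\mathbb{N}}$, $H(u)^+$ is the operator on $\ell^2(\mathbb{N})$ with matrix $(H_{ij})_{i,j\in\mathbb{N}}$, where $(H_{ij})_{i,j\in\mathbb{Z}}$ is the matrix of $L+S^\gamma M_{\tilde u}$ for any extension $\tilde u\in\Sigma^{\mathbb{Z}}$ of $u$ (independent of the extension). The band-width $w$ is such that matrix entries vanish for $|i-j|>w$. $\mathcal{W}_N(u)$ is the set of all length-$N$ subwords $(u(k),\dots,u(k+N-1))$, $k\in\mathbb{N}$. $\nu_N(T):=\inf\{\|Tx\|:\|x\|=1,\ \operatorname{diam}(\operatorname{supp}x)<N\}$. *)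

(* Defs.v *)
From HB Require Import structures.
From mathcomp Require Import all_boot all_order all_algebra.
From mathcomp Require Import all_classical all_reals all_analysis.
From mathcomp.real_closed Require Export complex.
Set Implicit Arguments. Unset Strict Implicit. Unset Printing Implicit Defensive.
Import Order.TTheory GRing.Theory Num.Theory.
Export ComplexField.
Export numFieldTopology.Exports numFieldNormedType.Exports.

(* the norm (metric) topology of C = R[i], as for any numFieldType *)
HB.instance Definition _ (R : realType) := PseudoPointedMetric.copy R[i] (R[i])^o.

Local Open Scope classical_set_scope.
Local Open Scope ring_scope.

(* CONVENTION: the half axis N = {1,2,...} is represented by Rocq's nat
   with the shift n |-> n - 1, i.e. index k : nat stands for k+1 in N.
   So a sequence u in Sigma^N is a function u : nat -> C with u k = u(k+1). *)

Section Defs.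
Variable R : realType.
Local Notation C := R[i].

Definition modsq (z : C) : R := complex.Re z ^+ 2 + complex.Im z ^+ 2.

Definition l2norm (x : nat -> C) : R :=
  Num.sqrt (limn (series (fun n => modsq (x n)))).

Definition matapply (T : nat -> nat -> C) (x : nat -> C) : nat -> C :=
  fun i => limn (series (fun j => T i j * x j)).

Definition diam_supp_lt (x : nat -> C) (N : nat) : Prop :=
  forall m n : nat, x m != 0 -> x n != 0 -> (m - n < N)%N.

Definition nu (N : nat) (T : nat -> nat -> C) : R :=
  inf [set l2norm (matapply T x) | x in [set x | l2norm x = 1 /\ diam_supp_lt x N]].

(* matrix (on Z x Z) of  L + S^gamma M_ut  for ut : Z -> C, where L has
   matrix Lm : Z -> Z -> C; (S^gamma M_ut)_{ij} = ut_j if i - j = gamma *)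
Definition Hz (Lm : int -> int -> C) (gamma : int) (ut : int -> C)
  : int -> int -> C :=
  fun i j => Lm i j + (if i - j == gamma then ut j else 0).

Definition extends (ut : int -> C) (u : nat -> C) : Prop :=
  forall k : nat, ut (k.+1)%:Z = u k.

(* H(u)^+ : the N x N part of the matrix of L + S^gamma M_ut, for any
   extension ut of u (it does not depend on the extension) *)
Definition Hplus (Lm : int -> int -> C) (gamma : int) (u : nat -> C)
  : nat -> nat -> C :=
  fun i j => Lm (i.+1)%:Z (j.+1)%:Z
             + (if (i.+1)%:Z - (j.+1)%:Z == gamma then u j else 0).

Definition subwords (N : nat) (u : nat -> C) : set (seq C) :=
  [set mkseq (fun i => u (k + i)%N) N | k in [set: nat]].

End Defs.

(* Main.v *)
Require Import Defs.
From HB Require Import structures.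
From mathcomp Require Import all_boot all_order all_algebra.
From mathcomp Require Import all_classical all_reals all_analysis.
From mathcomp Require Import zify ring lra.
Import Order.TTheory GRing.Theory Num.Theory.
Local Open Scope classical_set_scope.
Local Open Scope ring_scope.
Lemma hausC (R : realType) : hausdorff_space R[i].
Proof. exact: (@norm_hausdorff _ (R[i]^o)). Qed.

Lemma lim_finC (R : realType) (f : nat -> R[i]) M :
  (forall n, (M <= n)%N -> f n = 0) -> limn (series f) = \sum_(0 <= k < M) f k.
Proof.
move=> H; apply: (lim_near_cst (hausC R)); near=> n.
have Mn : (M <= n)%N by near: n; exists M.
rewrite /series /= (@big_cat_nat _ _ _ M 0 n _ _ (leq0n M) Mn) /= -[RHS]addr0; congr (_ + _); rewrite big_nat_cond big1 //.
by move=> i /andP[/andP[/H ->]].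
Unshelve. all: end_near. Qed.

Lemma lim_finR (R : realType) (f : nat -> R) M :
  (forall n, (M <= n)%N -> f n = 0) -> limn (series f) = \sum_(0 <= k < M) f k.
Proof.
move=> H; apply: (lim_near_cst (@norm_hausdorff _ R^o)); near=> n.
have Mn : (M <= n)%N by near: n; exists M.
rewrite /series /= (@big_cat_nat _ _ _ M 0 n _ _ (leq0n M) Mn) /= -[RHS]addr0; congr (_ + _); rewrite big_nat_cond big1 //.
by move=> i /andP[/andP[/H ->]].
Unshelve. all: end_near. Qed.

Section Aux.
Variable R : realType.
Local Notation C := R[i].

Lemma modsq0 : modsq (0 : C) = 0.
Proof. by rewrite /modsq /= expr0n /= addr0. Qed.

Lemma modsq_ge0 (z : C) : 0 <= modsq z.
Proof. by rewrite /modsq addr_ge0 // sqr_ge0. Qed.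

Lemma l2norm_fin (x : nat -> C) M : (forall n, (M <= n)%N -> x n = 0) ->
  l2norm x = Num.sqrt (\sum_(0 <= k < M) modsq (x k)).
Proof.
move=> H; rewrite /l2norm (@lim_finR R _ M) // => n /H ->; exact: modsq0.
Qed.

Lemma matapply_fin (T : nat -> nat -> C) (x : nat -> C) M i :
  (forall n, (M <= n)%N -> x n = 0) ->
  matapply T x i = \sum_(0 <= j < M) T i j * x j.
Proof.
move=> H; rewrite /matapply (@lim_finC R _ M) // => n /H ->; exact: mulr0.
Qed.

Definition shiftv (s : nat) (x : nat -> C) : nat -> C :=
  fun j => if (s <= j)%N then x (j - s)%N else 0.

Lemma shiftv_fin s x N : (forall n, (N <= n)%N -> x n = 0) ->
  forall n, (s + N <= n)%N -> shiftv s x n = 0.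
Proof.
move=> H n Hn; rewrite /shiftv; case: ifP => // _; apply: H; lia.
Qed.

Lemma l2norm_shift s x N : (forall n, (N <= n)%N -> x n = 0) ->
  l2norm (shiftv s x) = l2norm x.
Proof.
move=> H; rewrite (@l2norm_fin x N) // (@l2norm_fin _ (s + N)); last first.
  exact: shiftv_fin.
congr Num.sqrt.
rewrite (@big_cat_nat _ _ _ s 0 (s + N) _ _ (leq0n s)) ?leq_addr //=.
rewrite big_nat_cond big1 ?add0r; last first.
  by move=> i /andP[/andP[_ Hi] _]; rewrite /shiftv leqNgt Hi /= modsq0.
rewrite -{1}(add0n s) big_addn addKn; apply: eq_bigr => i _.
by rewrite /shiftv leq_addl addnK.
Qed.

End Aux.
Arguments shiftv {R}.

Section FsSec.
Variable R : realType.
Definition Fs (h : int -> R) (T s : nat) := \sum_(0 <= i < s + T) h (i%:Z - s%:Z).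

Lemma FsS h T s : Fs h T s.+1 = h (- (s.+1)%:Z) + Fs h T s.
Proof.
rewrite /Fs addSn big_nat_recl //; congr (_ + _); first by congr h; lia.
by apply: eq_bigr => i _; congr h; lia.
Qed.

Lemma Fs_mono h T (h0 : forall t, 0 <= h t) s d : Fs h T s <= Fs h T (s + d).
Proof.
elim: d => [|d IH]; first by rewrite addn0.
by rewrite addnS FsS; apply: le_trans IH _; rewrite lerDr h0.
Qed.

Lemma Fs_const h T w (hz : forall t, t < - w%:Z -> h t = 0) d :
  Fs h T (w + d) = Fs h T w.
Proof.
elim: d => [|d IH]; first by rewrite addn0.
by rewrite addnS FsS hz ?add0r //; lia.
Qed.
End FsSec.
Arguments Fs {R}.

Section Core.
Variable R : realType.
Local Notation C := R[i].
Variables (Lm : int -> int -> C) (gamma : int).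
Hypothesis hLS : forall i j : int, Lm i (j + 1) = Lm (i - 1) j.

Lemma LmS p q (n : nat) : Lm (p + n%:Z) (q + n%:Z) = Lm p q.
Proof.
elim: n => [|n IH]; first by rewrite !addr0.
have -> : p + (n.+1)%:Z = (p + n%:Z + 1) by lia.
have -> : q + (n.+1)%:Z = (q + n%:Z + 1) by lia.
by rewrite hLS addrK.
Qed.

Variables (N : nat) (a x : nat -> C).

Definition gfun (t : int) : C :=
  \sum_(0 <= j < N) (Lm (t + 1) (j%:Z + 1) + (if t - j%:Z == gamma then a j else 0)) * x j.

Hypothesis xfin : forall n, (N <= n)%N -> x n = 0.

Lemma apply_shift (u : nat -> C) s i :
  (forall j, (j < N)%N -> u (s + j)%N = a j) ->
  matapply (Hplus Lm gamma u) (shiftv s x) i = gfun (i%:Z - s%:Z).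
Proof.
move=> hu; rewrite (@matapply_fin R _ _ (s + N)); last exact: shiftv_fin.
rewrite (@big_cat_nat _ _ _ s 0 (s + N) _ _ (leq0n s)) ?leq_addr //=.
rewrite big_nat_cond big1 ?add0r; last first.
  by move=> j /andP[/andP[_ Hj] _]; rewrite /shiftv leqNgt Hj /= mulr0.
rewrite -{1}(add0n s) big_addn addKn /gfun big_nat_cond [RHS]big_nat_cond.
apply: eq_bigr => j /andP[/andP[_ Hj] _].
rewrite /shiftv leq_addl addnK /Hplus.
have -> : (i.+1)%:Z = i%:Z - s%:Z + 1 + s%:Z by lia.
have -> : ((j + s).+1)%:Z = j%:Z + 1 + s%:Z by lia.
have -> : i%:Z - s%:Z + 1 + s%:Z - (j%:Z + 1 + s%:Z) = i%:Z - s%:Z - j%:Z by lia.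
by rewrite LmS addnC hu.
Qed.

Variables (b : nat -> C) (w m : nat).
Hypothesis HB : forall (i : int) (j : nat), w%:Z < `|i - (j.+1)%:Z| ->
  Lm i (j.+1)%:Z + (if i - (j.+1)%:Z == gamma then b j else 0) = 0.
Hypothesis ha : forall j, (j < N)%N -> a j = b (m + j).

Lemma gzero t : (t < - w%:Z) || (N%:Z + w%:Z <= t) -> gfun t = 0.
Proof.
move=> ht; rewrite /gfun big_nat_cond big1 // => j /andP[/andP[_ Hj] _].
rewrite ha // -(LmS _ _ m).
have := HB (t + 1 + m%:Z) (m + j).
have -> : ((m + j).+1)%:Z = j%:Z + 1 + m%:Z by lia.
have -> : t + 1 + m%:Z - (j%:Z + 1 + m%:Z) = t - j%:Z by lia.
move=> ->; first by rewrite mul0r.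
case/orP: ht => ht; lia.
Qed.

Lemma norm_shift u s : (forall j, (j < N)%N -> u (s + j)%N = a j) ->
  l2norm (matapply (Hplus Lm gamma u) (shiftv s x)) =
  Num.sqrt (Fs (fun t => modsq (gfun t)) (N + w) s).
Proof.
move=> hu; rewrite (@l2norm_fin R _ (s + (N + w))).
  by congr Num.sqrt; apply: eq_bigr => i _; rewrite apply_shift.
move=> n Hn; rewrite apply_shift // gzero ?modsq0 //.
apply/orP; right; lia.
Qed.

End Core.

Theorem proposition4p8 (R : realType) (Sigma : set R[i])
  (Lm : int -> int -> R[i]) (gamma : int) (b c : nat -> R[i]) (w N : nat) :
  (* Sigma is a nonempty compact subset of C *)
  Sigma !=set0 -> compact Sigma ->
  (* L is a band operator on l^2(Z) (given by its matrix Lm) *)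
  (exists w0 : nat, forall i j : int, w0%:Z < `|i - j| -> Lm i j = 0) ->
  (* L S = S L, as matrices: (LS)_{ij} = L_{i,j+1}, (SL)_{ij} = L_{i-1,j} *)
  (forall i j : int, Lm i (j + 1) = Lm (i - 1) j) ->
  (* b, c in Sigma^N *)
  (forall k, Sigma (b k)) -> (forall k, Sigma (c k)) ->
  (* w is a band-width: entries of the matrix of L + S^gamma M_ut vanish
     for |i - j| > w, for every extension ut in Sigma^Z of b or of c *)
  (forall (u : nat -> R[i]) (ut : int -> R[i]), (u = b \/ u = c) ->
     (forall n, Sigma (ut n)) -> extends ut u ->
     forall i j : int, w%:Z < `|i - j| -> Hz Lm gamma ut i j = 0) ->
  (* N in N = {1,2,...} *)
  (0 < N)%N ->
  (* b|_{1..w+N-1} = c|_{1..w+N-1} *)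
  (forall k : nat, (k < w + N - 1)%N -> b k = c k) ->
  (* W_N(b) is contained in W_N(c) *)
  subwords N b `<=` subwords N c ->
  nu N (Hplus Lm gamma c) <= nu N (Hplus Lm gamma b).
Proof.
move=> [s0 Ss0] _ _ hLS Sb Sc hband N0 hbc hsub.
pose ut := fun n : int => if (0 < n) then b (`|n|%N.-1) else s0.
have hut : forall n, Sigma (ut n) by move=> n; rewrite /ut; case: ifP.
have ext : extends ut b by move=> k.
have HB : forall (i : int) (j : nat), w%:Z < `|i - (j.+1)%:Z| ->
    Lm i (j.+1)%:Z + (if i - (j.+1)%:Z == gamma then b j else 0) = 0.
  move=> i j hij; move: (hband b ut (or_introl erefl) hut ext i (j.+1)%:Z hij).
  by rewrite /Hz ext.
rewrite /nu; apply: lb_le_inf.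
  pose x0 := fun j : nat => if j == 0%N then (1 : R[i]) else 0.
  exists (l2norm (matapply (Hplus Lm gamma b) x0)); exists x0; last by [].
  split.
    rewrite (@l2norm_fin R x0 1); last by move=> n; rewrite /x0; case: n.
    by rewrite big_nat1 /x0 /= /modsq /= expr1n expr0n /= addr0 sqrtr1.
  move=> p q; rewrite /x0; case: (p =P 0%N) => [->|_]; case: (q =P 0%N) => [->|_]; rewrite ?eqxx // => _ _; rewrite subnn.
move=> e [x [xn xd] <-].
have exP : exists j, x j != 0.
  case: (pselect (exists j, x j != 0)) => // H; exfalso.
  have x00 : forall j, x j = 0.
    by move=> j; case: (eqVneq (x j) 0) => // hj; exfalso; apply: H; exists j.
  rewrite (@l2norm_fin R x 0 (fun n _ => x00 n)) big_geq // sqrtr0 in xn.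
  by move/eqP: xn; rewrite eq_sym oner_eq0.
case: (ex_minnP exP) => m xm mmin.
have xsupp : forall j, x j != 0 -> (m <= j)%N && (j < m + N)%N.
  move=> j xj; rewrite mmin //=; have := xd j m xj xm; lia.
pose x' := fun j => if (j < N)%N then x (m + j)%N else 0.
have x'fin : forall n, (N <= n)%N -> x' n = 0 by move=> n hn; rewrite /x' ltnNge hn.
have xE : x = shiftv m x'.
  apply: funext => j; rewrite /shiftv /x'.
  have [xj0|xj] := eqVneq (x j) 0.
    by case: ifP => // hmj; case: ifP => // _; rewrite subnKC.
  have /andP[h1 h2] := xsupp j xj.
  rewrite h1 ifT ?subnKC //; lia.
pose a := fun j => b (m + j)%N.
have ha : forall j, (j < N)%N -> a j = b (m + j)%N by [].
have [k [hk hkm]] : exists k, (forall j, (j < N)%N -> c (k + j)%N = a j) /\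
    ((m < w)%N -> k = m).
  case: (ltnP m w) => hmw.
    exists m; split => // j hj; rewrite /a hbc //; lia.
  have : subwords N c (mkseq (fun i => b (m + i)%N) N) by apply: hsub; exists m.
  case=> k _ hkE; exists k; split; last by move=> h; lia.
  by move=> j hj; move/(congr1 (fun s => nth 0 s j)): hkE; rewrite !nth_mkseq.
apply: (@le_trans _ _ (l2norm (matapply (Hplus Lm gamma c) (shiftv k x')))).
  apply: ge_inf.
    by exists 0 => _ [z _ <-]; rewrite /l2norm sqrtr_ge0.
  exists (shiftv k x') => //; split.
    by rewrite (@l2norm_shift R k x' N x'fin) -(@l2norm_shift R m x' N x'fin) -xE.
  have ysupp : forall p, shiftv k x' p != 0 -> (k <= p)%N && (p < k + N)%N.
    move=> p; rewrite /shiftv /x'; case: ifP => hkp; last by rewrite eqxx.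
    case: ifP => hp; last by rewrite eqxx.
    move=> _; apply/andP; split; lia.
  by move=> p q /ysupp/andP[? ?] /ysupp/andP[? ?]; lia.
rewrite xE (@norm_shift R Lm gamma hLS N a x' x'fin b w m HB ha c k hk) (@norm_shift R Lm gamma hLS N a x' x'fin b w m HB ha b m (fun j _ => erefl)).
apply: ler_wsqrtr.
have hz : forall t : int, t < - w%:Z -> modsq (gfun R Lm gamma N a x' t) = 0.
  move=> t ht; rewrite (@gzero R Lm gamma hLS N a x' b w m HB ha t) ?modsq0 //.
  by rewrite ht.
case: (ltnP m w) => hmw; first by rewrite hkm.
case: (leqP k m) => hkm'.
  by rewrite -(subnKC hkm'); apply: Fs_mono => t; exact: modsq_ge0.
rewrite -(subnKC hmw) -(subnKC (leq_trans hmw (ltnW hkm'))) !Fs_const //.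
Qed.
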